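(* Let $A\in\mathbb{R}_{\max}^{n\times n}$ with $\lambda(A)=0$, let $g=g(\mathrm{crit}(A))$, assume $T_1(A)=\mathrm{DM}(g,n)$ and that $\mathrm{crit}(A)$ contains, up to choice of first node, a unique cycle $Z_0$ of length $g$. Let $i$ be a node of $Z_0$ and $j$ a node not in $Z_0$. Then in any interesting walk: (i) between any two consecutive occurrences of $i$ there is exactly one occurrence of $j$; (ii) there is exactly one occurrence of $j$ before the first occurrence of $i$ and exactly one occurrence of $j$ after the last occurrence of $i$.
   Context: Max-plus semiring $\mathbb{R}_{\max}=\mathbb{R}\cup\{-\infty\}$ with $a\oplus b=\max(a,b)$, $a\otimes b=a+b$; $(AB)_{ij}=\max_k(a_{ik}+b_{kj})$; $A^t$ is the $t$-th max-plus power, $A^0=I$. $\mathcal{D}(A)$ is the digraph on $\{1,\dots,n\}$ with arc $(i,j)$ of weight $a_{ij}$ whenever $a_{ij}\ne-\infty$. A walk is a node sequence whose consecutive pairs are arcs, its length is its number of arcs and its weight the sum of its arc weights; cycles are closed walks with no proper closed subwalk. $\lambda(A)$ is the maximal cycle mean. $\mathrm{crit}(A)$ is the subgraph of all nodes and arcs of cycles attaining $\lambda(A)$; its nodes are critical. $g(\mathrm{crit}(A))$ is the maximum over strongly connected components of $\mathrm{crit}(A)$ of their minimal cycle length. The cyclicity of $\mathrm{crit}(A)$ is the lcm over components of the gcd of their cycle lengths. CSR terms: with $\gamma$ the cyclicity of $\mathrm{crit}(A)$ and $\lambda(A)=0$, $M=I\oplus N\oplus\dots\oplus N^{n-1}$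 where $N=A^\gamma$: $c_{ij}=m_{ij}$ if $j$ critical, else $-\infty$; $r_{ij}=m_{ij}$ if $i$ critical, else $-\infty$; $s_{ij}=a_{ij}$ if $(i,j)$ is an arc of $\mathrm{crit}(A)$, else $-\infty$; $CS^tR[A]$ is the product $CS^tR$. $B_N$ has $(B_N)_{ij}=-\infty$ if $i$ or $j$ is critical and $a_{ij}$ otherwise. $T_1(A)$ is the least $T\ge0$ with $A^t=CS^tR[A]\oplus B_N^t$ for all $t\ge T$. $\mathrm{DM}(g,n)=g(n-2)+n$. Twice optimal / interesting walks: a walk $W$ from $i$ to $j$ passing through at least one node of $Z_0$ is twice optimal if it has maximal weight among all walks from $i$ to $j$ passing through a node of $Z_0$ whose length is congruent to the length of $W$ modulo $g$, and has minimal length among all such walks of maximal weight. It is interesting if it is twice optimal and has length $\mathrm{DM}(g,n)+g-1$. *)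

(* Defs.v *)
(* Max-plus matrices over an arbitrary real field R
   (the paper's R is the instance R = real numbers); -oo is None. *)
From HB Require Import structures.
From mathcomp Require Import all_boot all_order all_algebra.
From Stdlib Require Import ClassicalEpsilon.
Set Implicit Arguments. Unset Strict Implicit. Unset Printing Implicit Defensive.
Import Order.TTheory GRing.Theory Num.Theory.

Definition asbool (P : Prop) : bool :=
  if excluded_middle_informative P then true else false.

Section MaxPlus.
Variable R : realFieldType.

Definition mp := option R.  (* None = -oo *)
Definition mp_add (x y : mp) : mp :=
  match x, y with
  | None, _ => y
  | _, None => x
  | Some a, Some b => Some (Num.max a b)
  end.
Definition mp_mul (x y : mp) : mp :=
  match x, y with
  | Some a, Some b => Some (a + b)%R
  | _, _ => None
  end.

Variable n : nat.
Definition mxmp := 'I_n -> 'I_n -> mp.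
Definition mp_id : mxmp := fun i j => if i == j then Some 0%R else None.
Definition mp_prod (A B : mxmp) : mxmp :=
  fun i j => \big[mp_add/None]_(k < n) mp_mul (A i k) (B k j).
Definition mp_plus (A B : mxmp) : mxmp := fun i j => mp_add (A i j) (B i j).
Fixpoint mp_pow (A : mxmp) (t : nat) : mxmp :=
  match t with 0 => mp_id | t'.+1 => mp_prod (mp_pow A t') A end.

Variable A : mxmp.

Definition arc (i j : 'I_n) : bool := A i j != None.

(* walks are nonempty node sequences; length = number of arcs *)
Definition arcs (w : seq 'I_n) := zip w (behead w).
Definition is_walk (w : seq 'I_n) : Prop :=
  w <> [::] /\ forall e, e \in arcs w -> arc e.1 e.2.
Definition wlen (w : seq 'I_n) : nat := (size w).-1.
Definition wweight (w : seq 'I_n) : R :=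
  (\sum_(e <- arcs w) odflt 0 (A e.1 e.2))%R.
Definition walk_from_to (w : seq 'I_n) (u v : 'I_n) : Prop :=
  is_walk w /\ onth w 0 = Some u /\ onth w (wlen w) = Some v.

(* cycles: closed walks (length >= 1) with no proper closed subwalk *)
Definition is_cycle (w : seq 'I_n) : Prop :=
  is_walk w /\ (0 < wlen w)%N /\ onth w 0 = onth w (wlen w) /\
  forall a b : nat, (a < b <= wlen w)%N -> (a, b) <> (0%N, wlen w) ->
    onth w a <> onth w b.
Definition cmean (c : seq 'I_n) : R := (wweight c / (wlen c)%:R)%R.

Definition max_cycle_mean (l : R) : Prop :=
  (exists c, is_cycle c /\ cmean c = l) /\
  (forall c, is_cycle c -> (cmean c <= l)%R).

Definition crit_cycle (c : seq 'I_n) : Prop :=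
  is_cycle c /\ forall c', is_cycle c' -> (cmean c' <= cmean c)%R.
Definition crit_node (k : 'I_n) : Prop := exists c, crit_cycle c /\ k \in c.
Definition crit_arc (k l : 'I_n) : Prop :=
  exists c, crit_cycle c /\ (k, l) \in arcs c.
Definition crit_walk (w : seq 'I_n) : Prop :=
  w <> [::] /\ (forall x, x \in w -> crit_node x) /\
  forall e, e \in arcs w -> crit_arc e.1 e.2.
Definition crit_graph_cycle (c : seq 'I_n) : Prop :=
  is_cycle c /\ crit_walk c.
Definition same_scc (k l : 'I_n) : Prop :=
  crit_node k /\ crit_node l /\
  (exists w, crit_walk w /\ onth w 0 = Some k /\ onth w (wlen w) = Some l) /\
  (exists w, crit_walk w /\ onth w 0 = Some l /\ onth w (wlen w) = Some k).
Definition comp_cycle_len (k : 'I_n) (m : nat) : Prop :=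
  exists c, crit_graph_cycle c /\ wlen c = m /\ forall x, x \in c -> same_scc k x.
Definition comp_min_cycle_len (k : 'I_n) (m : nat) : Prop :=
  comp_cycle_len k m /\ forall m', comp_cycle_len k m' -> (m <= m')%N.
(* g = g(crit(A)) : max over components of the minimal cycle length *)
Definition crit_girth (g : nat) : Prop :=
  (exists k, crit_node k /\ comp_min_cycle_len k g) /\
  (forall k m, crit_node k -> comp_min_cycle_len k m -> (m <= g)%N).
Definition comp_gcd (k : 'I_n) (d : nat) : Prop :=
  (forall m, comp_cycle_len k m -> (d %| m)%N) /\
  (forall d', (forall m, comp_cycle_len k m -> (d' %| m)%N) -> (d' %| d)%N).
(* gamma = cyclicity of crit(A) : lcm over components of these gcds *)
Definition crit_cyclicity (gamma : nat) : Prop :=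
  (forall k d, crit_node k -> comp_gcd k d -> (d %| gamma)%N) /\
  (forall G, (forall k d, crit_node k -> comp_gcd k d -> (d %| G)%N) ->
     (gamma %| G)%N).

Definition csr_M (gamma : nat) : mxmp :=
  fun i j => \big[mp_add/None]_(k < n) mp_pow (mp_pow A gamma) k i j.
Definition csr_C (gamma : nat) : mxmp :=
  fun i j => if asbool (crit_node j) then csr_M gamma i j else None.
Definition csr_R (gamma : nat) : mxmp :=
  fun i j => if asbool (crit_node i) then csr_M gamma i j else None.
Definition csr_S : mxmp :=
  fun i j => if asbool (crit_arc i j) then A i j else None.
Definition B_N : mxmp :=
  fun i j => if asbool (crit_node i) || asbool (crit_node j) then None else A i j.
Definition CStR (gamma t : nat) : mxmp :=
  mp_prod (mp_prod (csr_C gamma) (mp_pow csr_S t)) (csr_R gamma).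
Definition csr_holds (gamma t : nat) : Prop :=
  forall i j, mp_pow A t i j = mp_plus (CStR gamma t) (mp_pow B_N t) i j.
Definition T1_is (T : nat) : Prop :=
  exists gamma, crit_cyclicity gamma /\
    (forall t, (T <= t)%N -> csr_holds gamma t) /\
    (forall T', (forall t, (T' <= t)%N -> csr_holds gamma t) -> (T <= T')%N).

Definition unique_crit_cycle (g : nat) (Z0 : seq 'I_n) : Prop :=
  crit_graph_cycle Z0 /\ wlen Z0 = g /\
  forall c, crit_graph_cycle c -> wlen c = g ->
    exists k, behead c = rot k (behead Z0).

Definition through (Z0 w : seq 'I_n) : bool := has (fun x => x \in Z0) w.
Definition twice_optimal (Z0 : seq 'I_n) (g : nat) (W : seq 'I_n) : Prop :=
  exists u v, walk_from_to W u v /\ through Z0 W /\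
  (forall V, walk_from_to V u v -> through Z0 V ->
     wlen V = wlen W %[mod g] -> (wweight V <= wweight W)%R) /\
  (forall V, walk_from_to V u v -> through Z0 V ->
     wlen V = wlen W %[mod g] -> wweight V = wweight W -> (wlen W <= wlen V)%N).

End MaxPlus.

Definition DM (g n : nat) : nat := g * (n - 2) + n.

Definition interesting (R : realFieldType) (n : nat) (A : mxmp R n)
  (Z0 : seq 'I_n) (g : nat) (W : seq 'I_n) : Prop :=
  twice_optimal A Z0 g W /\ wlen W = (DM g n + g - 1)%N.

(* Main.v *)
Require Import Defs.
From HB Require Import structures.
From mathcomp Require Import all_boot all_order all_algebra.
From mathcomp Require Import zify ring lra.
From Stdlib Require Import Lia.
Set Implicit Arguments. Unset Strict Implicit. Unset Printing Implicit Defensive.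
Import Order.TTheory GRing.Theory Num.Theory.

Lemma arcs1 {n} (x : 'I_n) : arcs [:: x] = [::].
Proof. by []. Qed.
Lemma arcs_cons2 {n} (x y : 'I_n) w : arcs (x :: y :: w) = (x, y) :: arcs (y :: w).
Proof. by []. Qed.

Lemma arcs_cat_cons {n} (s : seq 'I_n) y t :
  arcs (s ++ y :: t) = arcs (rcons s y) ++ arcs (y :: t).
Proof.
elim: s => [//|x s IH] /=.
case: s IH => [|z s] IH /=; first by rewrite /arcs.
by rewrite !arcs_cons2 -IH.
Qed.

Lemma wweight_cat_cons {R : realFieldType} {n} (A : mxmp R n) s y t :
  wweight A (s ++ y :: t) = (wweight A (rcons s y) + wweight A (y :: t))%R.
Proof. by rewrite /wweight arcs_cat_cons big_cat. Qed.

Lemma is_walk_cat_cons {R : realFieldType} {n} (A : mxmp R n) s y t :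
  is_walk A (s ++ y :: t) <-> is_walk A (rcons s y) /\ is_walk A (y :: t).
Proof.
rewrite /is_walk arcs_cat_cons; split.
  move=> [_ H]; split; split; first by case: s {H}.
  - by move=> e He; apply: H; rewrite mem_cat He.
  - by [].
  - by move=> e He; apply: H; rewrite mem_cat He orbT.
move=> [[_ H1] [_ H2]]; split; first by case: s {H1}.
by move=> e; rewrite mem_cat => /orP [] ?; [apply: H1|apply: H2].
Qed.

Lemma onth_some {T : Type} (x0 : T) s k : k < size s -> onth s k = Some (nth x0 s k).
Proof. by move=> Hk; rewrite onthE (nth_map x0). Qed.

Lemma not_uniq_split {T : eqType} (s : seq T) :
  ~~ uniq s -> exists s1 y s2 s3, s = s1 ++ y :: s2 ++ y :: s3.
Proof.
elim: s => [//|x s IH] /=.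
rewrite negb_and negbK => /orP [xs|/IH [s1 [y [s2 [s3 ->]]]]].
  case/splitPr: xs => s2 s3.
  by exists [::], x, s2, s3.
by exists (x :: s1), y, s2, s3.
Qed.

Lemma uniq_is_cycle {R : realFieldType} {n} (A : mxmp R n) x l :
  is_walk A (x :: rcons l x) -> uniq (x :: l) -> is_cycle A (x :: rcons l x).
Proof.
move=> Hw Hu; have Hs : size (x :: rcons l x) = (size l).+2 by rewrite /= size_rcons.
rewrite /is_cycle /wlen Hs /=; split; first exact: Hw.
split; first by [].
split.
  by rewrite (onth_some x) ?size_rcons // nth_rcons ltnn eqxx.
move=> a b /andP [ab bl] ne.
have al : a < (size l).+1 by apply: leq_trans ab bl.
rewrite (onth_some x) ?Hs ?ltnS ?(ltnW al) // (onth_some x) ?Hs ?ltnS //.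
move=> [] Heq.
move: bl; rewrite leq_eqVlt => /orP [/eqP bE|bl].
  subst b.
  case: a ab al ne Heq => [|a] ab al ne Heq; first by apply: ne.
  move: Heq; rewrite /= !nth_rcons ltnn eqxx.
  rewrite ltnS in al; rewrite al => Heq.
  by move: Hu => /= /andP [/negP []]; rewrite -Heq mem_nth.
have : nth x (x :: l) a = nth x (x :: l) b.
  move: Heq; rewrite -!rcons_cons !nth_rcons /= ltnS.
  by rewrite -ltnS al bl.
move/eqP; rewrite (nth_uniq x) //= ?al ?bl //.
by move/eqP => ab'; move: ab; rewrite ab' ltnn.
Qed.

Lemma cw_le0 {R : realFieldType} {n} (A : mxmp R n) :
  max_cycle_mean A 0 ->
  forall k l x, size l <= k -> is_walk A (x :: rcons l x) ->
  (wweight A (x :: rcons l x) <= 0)%R.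
Proof.
move=> [_ Hmax]; elim=> [|k IH] l x Hk Hw.
  case: l Hk Hw => // _ Hw.
  have Hc := uniq_is_cycle (l := [::]) Hw erefl.
  have := Hmax _ Hc; rewrite /cmean /wlen /= divr1 //.
case Hu: (uniq (x :: l)).
  have Hc := uniq_is_cycle Hw Hu.
  have := Hmax _ Hc; rewrite /cmean /wlen /= size_rcons.
  set m := ((size l).+1)%:R%R; set w := wweight A _ => H.
  have m0 : (0 < m)%R by rewrite /m ltr0n.
  have -> : w = (w / m * m)%R by rewrite divfK // gt_eqF.
  by rewrite mulr_le0_ge0 // ltW.
have [s1 [y [s2 [s3 Hs]]]] := not_uniq_split (negbT Hu).
have Hsz : size l = (size s1 + size s2 + size s3).+1.
  have := congr1 size Hs; rewrite /= !size_cat /= size_cat /=; lia.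
have Hc : x :: rcons l x = s1 ++ y :: s2 ++ y :: rcons s3 x.
  by rewrite -rcons_cons Hs rcons_cat /= rcons_cat.
move: Hw; rewrite Hc => Hw.
have [Hw1 Hw2] := (is_walk_cat_cons A s1 y (s2 ++ y :: rcons s3 x)).1 Hw.
have [Hw3 Hw4] := (is_walk_cat_cons A (y :: s2) y (rcons s3 x)).1 Hw2.
rewrite wweight_cat_cons.
rewrite (wweight_cat_cons A (y :: s2)).
have E2 : (wweight A (rcons (y :: s2) y) <= 0)%R.
  rewrite rcons_cons; apply: IH; last by rewrite -rcons_cons.
  move: Hk; rewrite Hsz ltnS => Hk; apply: leq_trans Hk; by rewrite addnAC leq_addl.
have Hw5 : is_walk A (s1 ++ y :: rcons s3 x) by apply/is_walk_cat_cons.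
have E1 : (wweight A (s1 ++ y :: rcons s3 x) <= 0)%R.
  case: s1 Hs Hsz Hw5 {Hc Hw Hw1} => [|x' s1] /= [<-] Hs Hsz Hw5.
    apply: IH => //; move: Hk; rewrite Hsz ltnS => Hk; apply: leq_trans Hk.
    by rewrite add0n leq_addl.
  have -> : x :: s1 ++ y :: rcons s3 x = x :: rcons (s1 ++ y :: s3) x.
    by rewrite rcons_cat.
  apply: IH; last by rewrite rcons_cat.
  move: Hk; rewrite Hsz ltnS => Hk; apply: leq_trans Hk.
  rewrite size_cat /=; lia.
by move: E1; rewrite wweight_cat_cons; lra.
Qed.

Lemma wft_cons {R : realFieldType} {n} (A : mxmp R n) x w u v :
  walk_from_to A (x :: w) u v <-> is_walk A (x :: w) /\ x = u /\ last x w = v.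
Proof.
rewrite /walk_from_to /wlen /=.
have -> : onth (x :: w) (size w) = Some (last x w).
  by rewrite (onth_some x) //= -[X in nth _ _ X]/((size (x :: w)).-1) nth_last.
by split => [[Hw [[<-] [<-]]]|[Hw [<- <-]]].
Qed.

Definition Red {R : realFieldType} {n} (A : mxmp R n) (W V : seq 'I_n) : Prop :=
  (forall u v, walk_from_to A W u v -> walk_from_to A V u v) /\
  (is_walk A W -> (wweight A W <= wweight A V)%R).

Lemma Red_refl {R : realFieldType} {n} (A : mxmp R n) W : Red A W W.
Proof. by split. Qed.

Lemma Red_trans {R : realFieldType} {n} (A : mxmp R n) W V1 V2 :
  Red A W V1 -> Red A V1 V2 -> Red A W V2.
Proof.
move=> [H1 H2] [H3 H4]; split; first by move=> u v /H1 /H3.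
move=> Hw; case: W Hw H1 H2 => [[//]|x w] Hw H1 H2.
have := H1 x (last x w); rewrite wft_cons => /(_ (conj Hw (conj erefl erefl))).
move=> [Hv _]; apply: le_trans (H2 Hw) (H4 Hv).
Qed.

Lemma Red_cut {R : realFieldType} {n} (A : mxmp R n) a x l b :
  max_cycle_mean A 0 -> Red A (a ++ x :: l ++ x :: b) (a ++ x :: b).
Proof.
move=> Hm.
have Hwk : is_walk A (a ++ x :: l ++ x :: b) ->
   [/\ is_walk A (rcons a x), is_walk A (x :: rcons l x), is_walk A (x :: b) &
       wweight A (a ++ x :: l ++ x :: b) =
       (wweight A (rcons a x) + wweight A (x :: rcons l x) + wweight A (x :: b))%R].
  move=> /is_walk_cat_cons [H1 H2].
  have [H3 H4] := (is_walk_cat_cons A (x :: l) x b).1 H2.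
  split => //.
  by rewrite wweight_cat_cons (wweight_cat_cons A (x :: l)) addrA.
have Hwk' : is_walk A (rcons a x) -> is_walk A (x :: b) -> is_walk A (a ++ x :: b).
  by move=> H1 H2; apply/is_walk_cat_cons.
split.
  move=> u v.
  case: a {Hwk Hwk'} (Hwk) (Hwk') => [|y a] Hwk Hwk'; rewrite /= !wft_cons.
    move=> [Hw [Hu Hv]]; have [_ _ H3 _] := Hwk Hw; split; first exact: H3.
    by split => //; rewrite -Hv /= last_cat.
  move=> [Hw [Hu Hv]]; have [H1 _ H3 _] := Hwk Hw; split; first exact: Hwk'.
  by split => //; rewrite -Hv /= !last_cat /= last_cat.
move=> Hw; have [H1 H2 H3 ->] := Hwk Hw.
rewrite wweight_cat_cons.
have := cw_le0 Hm (leqnn _) H2; lra.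
Qed.

Lemma sumn_take_drop (c : seq nat) k : sumn c = sumn (take k c) + sumn (drop k c).
Proof. by rewrite -sumn_cat cat_take_drop. Qed.

Lemma PH1 (g : nat) (c : seq nat) : 0 < g -> g <= size c ->
  exists r : bitseq, [/\ size r = size c, has id r & sumn (mask r c) %% g = 0].
Proof.
move=> g0 gc.
pose f (t : 'I_g.+1) : 'I_g := Ordinal (ltn_pmod (sumn (take t c)) g0).
have : ~~ injectiveb f.
  apply/negP => /injectiveP /leq_card; rewrite !card_ord; lia.
case/injectivePn => t1 [t2 ne Hf].
have Hm : sumn (take t1 c) %% g = sumn (take t2 c) %% g by move: Hf => [].
wlog lt12 : t1 t2 ne Hm {Hf} / t1 < t2.
  move=> Hw; case: (ltngtP t1 t2) => [h|h|h]; first exact: (Hw t1 t2).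
    by apply: (Hw t2 t1) => //; rewrite eq_sym.
  by move: ne; rewrite (val_inj h) eqxx.
have t2c : t2 <= size c by apply: leq_trans gc; rewrite -ltnS.
exists (nseq t1 false ++ nseq (t2 - t1) true ++ nseq (size c - t2) false).
split.
- rewrite !size_cat !size_nseq; lia.
- by rewrite !has_cat !has_nseq /= subn_gt0 lt12 /= andbF orbT.
rewrite -[c in mask _ c](cat_take_drop t1) mask_cat ?size_nseq ?size_take; last first.
  by rewrite (leq_trans lt12 t2c).
rewrite mask_false /=.
have Hd : size (drop t1 c) = (t2 - t1) + (size c - t2) by rewrite size_drop; lia.
rewrite -[drop t1 c](cat_take_drop (t2 - t1)) mask_cat ?size_nseq ?size_take ?Hd; last first.
  by case: ltnP => //; lia.
rewrite mask_true ?size_nseq ?size_take ?Hd; last by case: ltnP => //; lia.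
rewrite mask_false cats0.
rewrite /=.
have E : (t2 : nat) = t1 + (t2 - t1) by lia.
move: Hm; rewrite [in X in _ = X -> _]E takeD sumn_cat.
move=> /eqP; rewrite -{1}[sumn (take t1 c)]addn0 eqn_modDl mod0n eq_sym => /eqP.
done.
Qed.

Lemma PH2 (g : nat) (c : seq nat) t0 : 0 < g -> t0 < size c -> g < size c ->
  exists r : bitseq,
  [/\ size r = size c, nth false r t0 = false, has id r & sumn (mask r c) %% g = 0].
Proof.
move=> g0 t0c gc.
set c' := take t0 c ++ drop t0.+1 c.
have sc' : size c' = (size c).-1.
  rewrite /c' size_cat size_take size_drop t0c; lia.
have [r' [sr' hr' mr']] : exists r : bitseq, [/\ size r = size c', has id r & sumn (mask r c') %% g = 0].
  by apply: PH1 => //; rewrite sc'; lia.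
have t0r : t0 <= size r' by rewrite sr' sc'; lia.
exists (take t0 r' ++ false :: drop t0 r'); split.
- rewrite size_cat /= size_take size_drop sr' sc'; case: ltnP; lia.
- rewrite nth_cat size_take.
  have -> : (if t0 < size r' then t0 else size r') = t0.
    by case: ltnP => // h; apply/eqP; rewrite eqn_leq h t0r.
  by rewrite ltnn subnn.
- move: hr'; rewrite -{1}(cat_take_drop t0 r') !has_cat /=.
  by case/orP => ->; rewrite ?orbT.
rewrite -(cat_take_drop t0 c) (drop_nth 0 t0c) mask_cat; last first.
  by rewrite !size_take t0c; case: ltnP => //; lia.
rewrite /= -mask_cat //; last by rewrite !size_take t0c; case: ltnP => //; lia.
by rewrite cat_take_drop.
Qed.

Lemma PH3 (g : nat) (c : seq nat) t0 e : 0 < g -> t0 < size c -> g <= size c ->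
  exists (b : bool) (r : bitseq),
  [/\ size r = size c, nth false r t0 = false, b || has id r &
      ((if b then e else 0) + sumn (mask r c)) %% g = 0].
Proof.
move=> g0 t0c gc.
have [r [sr nr hr mr]] := @PH2 g (e :: c) t0.+1 g0 t0c gc.
case: r sr nr hr mr => [//|b r] /= [sr] nr hr mr.
by exists b, r; split => //; case: b mr hr => /=.
Qed.

Definition goodsegs {n} (y : 'I_n) (segs : seq (seq 'I_n)) :=
  all (fun s => (s != [::]) && (last y s == y)) segs.

Lemma Red_mask {R : realFieldType} {n} (A : mxmp R n) (y : 'I_n) :
  max_cycle_mean A 0 -> forall segs, goodsegs y segs ->
  forall pre post m,
  Red A (pre ++ y :: flatten segs ++ post) (pre ++ y :: flatten (mask m segs) ++ post).
Proof.
move=> Hm; elim=> [|s segs IH] /=; first by move=> _ pre post m; rewrite mask0; apply: Red_refl.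
case/andP => /andP [s0 /eqP sl] gs pre post m.
have Hs : s = rcons (belast (head y s) (behead s)) y.
  by case: s s0 sl => [//|x s] _ /= sl; rewrite -sl lastI.
set l := belast _ _ in Hs.
have Hk : Red A (pre ++ y :: (s ++ flatten segs) ++ post)
                (pre ++ y :: (s ++ flatten (mask (drop 1 m) segs)) ++ post).
  have -> : pre ++ y :: (s ++ flatten segs) ++ post = (pre ++ y :: l) ++ y :: flatten segs ++ post.
    by rewrite Hs -catA /= cat_rcons -!catA.
  have -> : pre ++ y :: (s ++ flatten (mask (drop 1 m) segs)) ++ post =
            (pre ++ y :: l) ++ y :: flatten (mask (drop 1 m) segs) ++ post.
    by rewrite Hs -catA /= cat_rcons -!catA.
  exact: IH.
have Hr : Red A (pre ++ y :: (s ++ flatten segs) ++ post)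
                (pre ++ y :: flatten (mask (drop 1 m) segs) ++ post).
  apply: Red_trans (IH gs pre post (drop 1 m)).
  have -> : pre ++ y :: (s ++ flatten segs) ++ post = pre ++ y :: l ++ y :: (flatten segs ++ post).
    by rewrite Hs cat_rcons -!catA.
  exact: Red_cut.
case: m Hk Hr => [|[] m] /= Hk Hr.
- by [].
- by rewrite drop0 in Hk.
- by rewrite drop0 in Hr.
Qed.

Lemma shape_mask_split {T} (s : seq (seq T)) (m : bitseq) : size m = size s ->
  sumn (shape (mask m s)) + sumn (shape (mask (map negb m) s)) = sumn (shape s).
Proof.
elim: s m => [|x s IH] [|b m] //= [sm].
by case: b => /=; rewrite -(IH m sm); lia.
Qed.

Lemma mem_flatten_mask {T : eqType} (s : seq (seq T)) (m : bitseq) t0 z :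
  size m = size s -> t0 < size s -> nth false m t0 = true ->
  z \in nth [::] s t0 -> z \in flatten (mask m s).
Proof.
elim: s m t0 => [|x s IH] m t0 //.
case: m => [|b m] //= [sm] t0s; case: t0 t0s => [|t0] t0s /=.
  by move=> -> zx; rewrite mem_cat zx.
move=> nm zs; have H := IH m t0 sm t0s nm zs.
by case: b => //=; rewrite mem_cat H orbT.
Qed.

Lemma split_first {T : eqType} (y : T) s : y \in s ->
  exists p1 p2, s = p1 ++ y :: p2 /\ y \notin p1.
Proof.
elim: s => [//|x s IH] /=; rewrite in_cons.
case: (eqVneq y x) => [<- _|ne /= ys]; first by exists [::], s.
have [p1 [p2 [-> yp]]] := IH ys.
by exists (x :: p1), p2; rewrite in_cons negb_or ne yp.
Qed.

Definition segok {T : eqType} (y : T) (s : seq T) :=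
  (s != [::]) && (last y s == y) && (count_mem y s == 1).

Lemma decomp_rest {T : eqType} (y : T) : forall k (rest : seq T), size rest <= k ->
  exists segs post, [/\ rest = flatten segs ++ post, y \notin post & all (segok y) segs].
Proof.
elim=> [|k IH] rest Hk.
  by case: rest Hk => // _; exists [::], [::].
case: (boolP (y \in rest)) => yr; last by exists [::], rest.
have [p1 [p2 [Hr yp]]] := split_first yr.
have [|segs [post [Hp2 ypo Hs]]] := IH p2.
  by move: Hk; rewrite Hr size_cat /=; lia.
exists (rcons p1 y :: segs), post; split => //=.
  by rewrite Hr Hp2 -catA cat_rcons.
rewrite Hs andbT /segok last_rcons eqxx andbT -cats1 count_cat /=.
rewrite eqxx addn1 (count_memPn yp).
by case: p1 {Hr yp}.
Qed.

Lemma decomp {T : eqType} (y : T) (W : seq T) : y \in W ->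
  exists pre segs post,
  [/\ W = pre ++ y :: flatten segs ++ post, y \notin pre, y \notin post &
      all (segok y) segs].
Proof.
move=> yW; have [pre [rest [HW yp]]] := split_first yW.
have [segs [post [Hr ypo Hs]]] := decomp_rest y (leqnn (size rest)).
by exists pre, segs, post; rewrite HW Hr.
Qed.

Lemma decomp_count {T : eqType} (y : T) pre segs post :
  y \notin pre -> y \notin post -> all (segok y) segs ->
  count_mem y (pre ++ y :: flatten segs ++ post) = (size segs).+1.
Proof.
move=> yp ypo Hs; rewrite count_cat (count_memPn yp) /= eqxx count_cat (count_memPn ypo).
rewrite addn0 add0n add1n; congr S.
elim: segs Hs => [//|s segs IH] /= /andP [/andP [_ /eqP c1] Hs].
by rewrite count_cat c1 IH.
Qed.

Lemma segok_good {n} (y : 'I_n) segs : all (segok y) segs -> goodsegs y segs.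
Proof. by move=> H; apply/allP => s /(allP H) /andP [/andP [-> ->]]. Qed.

Definition Ctx {R : realFieldType} {n} (A : mxmp R n) (Z0 : seq 'I_n) g W :=
  [/\ max_cycle_mean A 0, 0 < g & twice_optimal A Z0 g W].

Lemma contraW {R : realFieldType} {n} (A : mxmp R n) Z0 g W V k :
  Ctx A Z0 g W -> Red A W V -> through Z0 V -> size V + k = size W -> 0 < k ->
  k %% g = 0 -> False.
Proof.
move=> [Hm g0 [u [v [HW [_ [Ho1 Ho2]]]]]] [Hr1 Hr2] thV Hs k0 kg.
have HV := Hr1 u v HW.
have Hwl : wlen V = wlen W %[mod g].
  rewrite /wlen -Hs; have [[HV0 _] _] := HV.
  clear -HV0 kg; case: V HV0 => // x V _ /=.
  by rewrite -modnDmr kg addn0.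
have Hle := Ho1 V HV thV Hwl.
have Hge := Hr2 (HW.1).
have := Ho2 V HV thV Hwl (le_anti (introT andP (conj Hle Hge))).
rewrite /wlen -Hs; have [[HV0 _] _] := HV.
clear -HV0 k0; by case: V HV0 => // x V _ /=; lia.
Qed.

Lemma shape_mask_pos {T : eqType} (segs : seq (seq T)) (r : bitseq) :
  all (fun s => s != [::]) segs -> has id r -> size r = size segs ->
  0 < sumn (shape (mask r segs)).
Proof.
elim: segs r => [|s segs IH] [|b r] //= /andP [s0 Hs] hr [sr].
case: b hr => /= hr; last exact: IH.
by case: s s0 {Hs} => //= x s _; lia.
Qed.

Lemma rem_segs_contra {R : realFieldType} {n} (A : mxmp R n) Z0 g W (y : 'I_n)
    pre segs post (r : bitseq) :
  Ctx A Z0 g W -> W = pre ++ y :: flatten segs ++ post -> all (segok y) segs ->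
  size r = size segs -> has id r -> sumn (shape (mask r segs)) %% g = 0 ->
  through Z0 (pre ++ y :: flatten (mask (map negb r) segs) ++ post) -> False.
Proof.
move=> C HW Hs sr hr mr th.
have [Hm _ _] := C.
apply: (contraW C _ th _ _ mr).
- by rewrite HW; apply: Red_mask => //; apply: segok_good.
- rewrite HW !size_cat /= !size_cat !size_flatten.
  rewrite -(shape_mask_split (s := segs) (m := r)) //; lia.
- apply: shape_mask_pos => //; apply/allP => s /(allP Hs).
  by case/andP => /andP [].
Qed.

Lemma flatten_nth_mem {T : eqType} (ss : seq (seq T)) z :
  z \in flatten ss -> exists2 t0, t0 < size ss & z \in nth [::] ss t0.
Proof.
elim: ss => [//|s ss IH] /=; rewrite mem_cat => /orP [zs|/IH [t0 t0s zt]].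
  by exists 0.
by exists t0.+1.
Qed.

Lemma segs_lt {R : realFieldType} {n} (A : mxmp R n) Z0 g W (y : 'I_n) pre segs post :
  Ctx A Z0 g W -> W = pre ++ y :: flatten segs ++ post -> all (segok y) segs ->
  (exists z, z \in Z0 /\ z \in pre ++ y :: post) -> size segs < g.
Proof.
move=> C HW Hs [z [zZ zin]]; rewrite ltnNge; apply/negP => gs.
have [_ g0 _] := C.
have := @PH1 g (shape segs) g0; rewrite size_map => /(_ gs) [r [sr hr mr]].
try rewrite size_map in sr.
apply: (rem_segs_contra C HW Hs sr hr); first by rewrite /shape map_mask.
apply/hasP; exists z => //.
move: zin; rewrite !mem_cat !in_cons mem_cat.
by case/orP => [->|/orP [->|->]]; rewrite ?orbT.
Qed.

Lemma segs_le {R : realFieldType} {n} (A : mxmp R n) Z0 g W (y : 'I_n) pre segs post :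
  Ctx A Z0 g W -> W = pre ++ y :: flatten segs ++ post -> all (segok y) segs ->
  size segs <= g.
Proof.
move=> C HW Hs; rewrite leqNgt; apply/negP => gs.
have [_ g0 [u [v [_ [thW _]]]]] := C.
case/hasP: thW => z; rewrite HW => zW zZ.
have : z \in pre ++ y :: post \/ z \in flatten segs.
  move: zW; rewrite !mem_cat !in_cons mem_cat.
  by case/orP => [->|/orP [->|/orP [->|->]]]; rewrite ?orbT; auto.
case => [zin|zF].
  have := segs_lt C HW Hs (ex_intro _ z (conj zZ zin)); lia.
have [t0 t0s zt] := flatten_nth_mem zF.
have := @PH2 g (shape segs) t0 g0; rewrite size_map => /(_ t0s gs) [r [sr nr hr mr]].
try rewrite size_map in sr.
apply: (rem_segs_contra C HW Hs sr hr); first by rewrite /shape map_mask.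
apply/hasP; exists z => //.
rewrite mem_cat in_cons mem_cat (mem_flatten_mask (t0 := t0)) ?orbT //.
- by rewrite size_map.
- by rewrite (nth_map false) ?sr // nr.
Qed.

Lemma mask_set {T} (r : bitseq) (c : seq T) t0 v v' :
  size r = size c -> t0 < size c -> nth false r t0 = false ->
  mask r (take t0 c ++ v :: drop t0.+1 c) = mask r (take t0 c ++ v' :: drop t0.+1 c).
Proof.
move=> sr t0c nr.
have t0r : t0 < size r by rewrite sr.
rewrite -(cat_take_drop t0 r) (drop_nth false t0r) nr.
rewrite !mask_cat //; by rewrite !size_take sr t0c.
Qed.

Lemma seg_split {T : eqType} (y : T) s :
  segok y s -> exists l, s = rcons l y /\ y \notin l.
Proof.
case/andP => /andP [s0 /eqP sl] /eqP c1.
case: s s0 sl c1 => [//|x s] _ sl c1.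
have E : x :: s = rcons (belast x s) y by rewrite lastI; congr rcons.
exists (belast x s); split => //.
apply/count_memPn; move: c1; rewrite E -cats1 count_cat /= eqxx; lia.
Qed.

Lemma count2_split {T : eqType} (i : T) l : 1 < count_mem i l ->
  exists a b c, l = a ++ i :: b ++ i :: c.
Proof.
move=> c2.
have il : i \in l by rewrite -has_pred1 has_count; lia.
have [a [l2 [El ia]]] := split_first il.
have il2 : i \in l2.
  rewrite -has_pred1 has_count; move: c2; rewrite El count_cat /= eqxx (count_memPn ia).
  rewrite add0n add1n ltnS; exact.
have [b [c [El2 _]]] := split_first il2.
by exists a, b, c; rewrite El El2.
Qed.

Lemma seg_i_le1 {R : realFieldType} {n} (A : mxmp R n) Z0 g W (i j : 'I_n) pre segs post t0 :
  Ctx A Z0 g W -> W = pre ++ j :: flatten segs ++ post -> all (segok j) segs ->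
  g <= size segs -> i \in Z0 -> i != j -> t0 < size segs ->
  count_mem i (nth [::] segs t0) <= 1.
Proof.
move=> C HW Hs gs iZ ij t0s; rewrite leqNgt; apply/negP => c2.
have [Hm g0 _] := C.
set s := nth [::] segs t0 in c2.
have sok : segok j s by apply: (allP Hs); rewrite mem_nth.
have [l [El jl]] := seg_split sok.
have c2' : 1 < count_mem i l.
  by move: c2; rewrite El -cats1 count_cat /= [j == i]eq_sym (negbTE ij) !addn0.
have [a [b [c El2]]] := count2_split c2'.
set s' := rcons (a ++ i :: c) j.
set segs1 := take t0 segs ++ s' :: drop t0.+1 segs.
set W1 := pre ++ j :: flatten segs1 ++ post.
have Esegs : segs = take t0 segs ++ s :: drop t0.+1 segs by rewrite -drop_nth // cat_take_drop.
have HW' : W = (pre ++ j :: flatten (take t0 segs) ++ a) ++ i :: b ++ i ::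
               (rcons c j ++ flatten (drop t0.+1 segs) ++ post).
  by rewrite HW {1}Esegs flatten_cat /= El El2 !cat_rcons -!catA /= -!catA.
have HW1 : W1 = (pre ++ j :: flatten (take t0 segs) ++ a) ++ i ::
               (rcons c j ++ flatten (drop t0.+1 segs) ++ post).
  by rewrite /W1 /segs1 flatten_cat /= /s' !cat_rcons -!catA /= -!catA.
have RW1 : Red A W W1 by rewrite HW' HW1; apply: Red_cut.
have sW1 : size W = size W1 + (size b).+1.
  rewrite HW' HW1 !size_cat /= !size_cat /= !size_cat size_rcons; lia.
have s'ok : segok j s'.
  have ja : j \notin a by apply: contra jl => ja'; rewrite El2 mem_cat ja'.
  have jc : j \notin c by apply: contra jl => jc'; rewrite El2 !(mem_cat, in_cons) jc' !orbT.
  rewrite /segok /s' last_rcons eqxx andbT.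
  rewrite -cats1 count_cat count_cat /= (count_memPn ja) (count_memPn jc) eqxx eq_sym (negbTE ij).
  by case: (a).
have Hs1 : all (segok j) segs1.
  rewrite /segs1 all_cat /= s'ok.
  by move: Hs; rewrite {1}Esegs all_cat /= => /and3P [-> _ ->].
have := @PH3 g (shape segs) t0 (size b).+1 g0; rewrite size_map => /(_ t0s gs).
case=> bb [r [sr nr hr mr]].
have key : forall base bsegs e, Red A W base -> base = pre ++ j :: flatten bsegs ++ post ->
    size W = size base + e -> all (segok j) bsegs -> size bsegs = size segs ->
    sumn (shape (mask r bsegs)) = sumn (shape (mask r segs)) ->
    i \in nth [::] bsegs t0 -> 0 < e + sumn (shape (mask r segs)) ->
    (e + sumn (mask r (shape segs))) %% g = 0 -> False.
  move=> base bsegs e Rb Eb sb Hsb ssb mb ib pos md.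
  set V := pre ++ j :: flatten (mask (map negb r) bsegs) ++ post.
  have RV : Red A W V.
    apply: Red_trans Rb _; rewrite Eb /V; apply: Red_mask => //; exact: segok_good.
  have sV : size V + (e + sumn (shape (mask r segs))) = size W.
    rewrite sb Eb /V -mb !size_cat /= !size_cat !size_flatten.
    rewrite -(shape_mask_split (s := bsegs) (m := r)) ?ssb //; lia.
  apply: (contraW C RV _ sV pos); last by rewrite /shape map_mask.
  apply/hasP; exists i => //.
  rewrite /V mem_cat in_cons mem_cat (mem_flatten_mask (t0 := t0)) ?orbT //.
  - by rewrite size_map sr ssb.
  - by rewrite ssb.
  - by rewrite (nth_map false) ?sr // nr.
have Esh : sumn (shape (mask r segs1)) = sumn (shape (mask r segs)).
  rewrite /shape !map_mask.
  have EX : map size segs = take t0 (map size segs) ++ size s :: drop t0.+1 (map size segs).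
    by rewrite {1}Esegs map_cat /= map_take map_drop.
  rewrite /segs1 map_cat /= map_take map_drop [in RHS]EX.
  by rewrite (@mask_set _ r _ t0 _ (size s)) // ?size_map.
have ssegs1 : size segs1 = size segs.
  rewrite /segs1 size_cat /= size_take size_drop t0s; lia.
case: bb hr mr => hr mr.
  apply: (key W1 segs1 (size b).+1 RW1 erefl sW1 Hs1 ssegs1 Esh) => //.
  by rewrite /segs1 nth_cat size_take t0s ltnn subnn /= /s' mem_rcons in_cons mem_cat in_cons eqxx !orbT.
apply: (key W segs 0 (Red_refl A W) HW (esym (addn0 _)) Hs erefl erefl) => //.
- by rewrite -/s El El2 mem_rcons in_cons mem_cat in_cons eqxx !orbT.
- by rewrite add0n; apply: shape_mask_pos => //; apply/allP => x /(allP Hs) /andP [/andP []].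
Qed.

Lemma count_take_le {T} (p : pred T) t s : count p (take t s) <= count p s.
Proof. by rewrite -{2}(cat_take_drop t s) count_cat leq_addr. Qed.

Lemma count_notin_take {T : eqType} (y : T) t s : y \notin s -> count_mem y (take t s) = 0.
Proof. move=> ys; apply/eqP; rewrite -leqn0 -(count_memPn ys); exact: count_take_le. Qed.

Definition Inv {T : eqType} (i j : T) (s : seq T) := forall t,
  count_mem j (take t s) <= count_mem i (take t s) <= (count_mem j (take t s)).+1.

Lemma inv_seg {T : eqType} (i j : T) s : i != j -> segok j s -> count_mem i s = 1 ->
  forall t, t < size s -> count_mem j (take t s) = 0 /\ count_mem i (take t s) <= 1.
Proof.
move=> ij sok ci t ts.
have [l [El jl]] := seg_split sok.
split; last by rewrite -ci count_take_le.
move: ts; rewrite El size_rcons ltnS => tl.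
by rewrite -cats1 takel_cat // count_notin_take.
Qed.

Lemma inv_flat {T : eqType} (i j : T) segs : i != j ->
  all (fun s => segok j s && (count_mem i s == 1)) segs ->
  Inv i j (flatten segs) /\ count_mem i (flatten segs) = count_mem j (flatten segs).
Proof.
move=> ij; elim: segs => [|s segs IH] /=.
  by move=> _; split => // t; rewrite take_nil.
case/andP => /andP [sok /eqP ci] Hs; have [IH1 IH2] := IH Hs.
have cj : count_mem j s = 1 by case/andP: sok => _ /eqP.
split; last by rewrite !count_cat IH2 ci cj.
move=> t; rewrite take_cat; case: ltnP => ts.
  have [h1 h2] := inv_seg ij sok ci ts; rewrite h1; lia.
rewrite !count_cat ci cj; have := IH1 (t - size s); lia.
Qed.

Lemma inv_full {T : eqType} (i j : T) pre segs post : i != j ->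
  i \notin pre -> j \notin pre -> i \notin post -> j \notin post ->
  all (fun s => segok j s && (count_mem i s == 1)) segs ->
  Inv j i (pre ++ j :: flatten segs ++ post).
Proof.
move=> ij ip jp ipo jpo Hs t.
have [I1 I2] := inv_flat ij Hs.
rewrite take_cat; case: ltnP => tp.
  by rewrite !count_notin_take.
rewrite !count_cat (count_memPn ip) (count_memPn jp) !add0n.
case: (t - size pre) => [|k] //=.
rewrite eqxx [j == i]eq_sym (negbTE ij) take_cat.
case: ltnP => kF.
  have := I1 k; rewrite /= add0n; lia.
rewrite !count_cat !count_notin_take // I2; lia.
Qed.

Lemma count_take_index {T : eqType} (i : T) s : count_mem i (take (index i s) s) = 0.
Proof.
elim: s => [//|x s IH] /=.
case: (eqVneq x i) => [->|ne] //=.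
by rewrite IH (negbTE ne).
Qed.

Lemma count_take_succ {T : eqType} (y : T) (W : seq T) t x0 : t < size W ->
  count_mem y (take t.+1 W) = count_mem y (take t W) + (nth x0 W t == y).
Proof. by move=> tW; rewrite (take_nth x0 tW) -cats1 count_cat /= addn0. Qed.

Lemma final_i {T : eqType} (i j : T) (W : seq T) x0 : i != j -> Inv j i W ->
  forall p q, p < q < size W -> nth x0 W p = i -> nth x0 W q = i ->
  (forall r, p < r < q -> nth x0 W r <> i) ->
  count_mem j (drop p.+1 (take q W)) = 1.
Proof.
move=> ij Hinv p q /andP [pq qW] Hp Hq Hr.
have pW : p < size W by apply: ltn_trans pq qW.
have Hsplit : take q W = take p.+1 W ++ drop p.+1 (take q W).
  by rewrite -{1}(cat_take_drop p.+1 (take q W)) take_takel.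
have mid0 : count_mem i (drop p.+1 (take q W)) = 0.
  apply/count_memPn/negP => /(nthP x0) [k]; rewrite size_drop size_take qW => kq.
  rewrite nth_drop nth_take; last by lia.
  by apply: (Hr (p.+1 + k)); lia.
have ciq : count_mem i (take q W) = count_mem i (take p.+1 W) by rewrite Hsplit count_cat mid0 addn0.
have cjq : count_mem j (take q W) = count_mem j (take p.+1 W) + count_mem j (drop p.+1 (take q W)).
  by rewrite {1}Hsplit count_cat.
have Ip := Hinv p; have Ip1 := Hinv p.+1; have Iq := Hinv q; have Iq1 := Hinv q.+1.
rewrite !(count_take_succ _ x0 pW) Hp eqxx (negbTE ij) in Ip1.
rewrite !(count_take_succ _ x0 qW) Hq eqxx (negbTE ij) in Iq1.
rewrite (count_take_succ _ x0 pW) Hp eqxx (count_take_succ j x0 pW) Hp (negbTE ij) in ciq cjq.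
lia.
Qed.

Lemma final_ii_a {T : eqType} (i j : T) (W : seq T) : i != j -> Inv j i W -> i \in W ->
  count_mem j (take (index i W) W) = 1.
Proof.
move=> ij Hinv iW.
have kW : index i W < size W by rewrite index_mem.
have I0 := Hinv (index i W); have I1 := Hinv (index i W).+1.
rewrite count_take_index in I0.
rewrite !(count_take_succ _ i kW) nth_index // eqxx (negbTE ij) count_take_index in I1.
lia.
Qed.

Lemma final_ii_b {T : eqType} (i j : T) (W : seq T) : i != j -> Inv j i W -> i \in W ->
  count_mem j W = (count_mem i W).+1 ->
  count_mem j (take (index i (rev W)) (rev W)) = 1.
Proof.
move=> ij Hinv iW tot.
set k := index i (rev W).
have kW : k < size W by rewrite -size_rev /k index_mem mem_rev.
set m := size W - k.+1.
have mW : m < size W by rewrite /m; lia.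
have m1 : m.+1 = size W - k by rewrite /m; lia.
have Hm : nth i W m = i by rewrite /m -nth_rev // nth_index // mem_rev.
rewrite take_rev count_rev.
have after0 : count_mem i (drop (size W - k) W) = 0.
  by rewrite -count_rev -take_rev count_take_index.
have Ecj : count_mem j W = count_mem j (take m.+1 W) + count_mem j (drop (size W - k) W).
  by rewrite -count_cat m1 cat_take_drop.
have Eci : count_mem i W = count_mem i (take m.+1 W).
  by rewrite -{1}(cat_take_drop (size W - k) W) count_cat after0 addn0 m1.
have I0 := Hinv m; have I1 := Hinv m.+1.
rewrite !(count_take_succ _ i mW) Hm eqxx (negbTE ij) in I1 Eci Ecj.
lia.
Qed.

Lemma sum_count_mem {n} (W : seq 'I_n) : \sum_(y < n) count_mem y W = size W.
Proof.
elim: W => [|x W IH] /=; first by rewrite big1.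
rewrite big_split /= IH (bigD1 x) //= eqxx big1 ?addn0 // => y /negbTE.
by rewrite eq_sym => ->.
Qed.

Lemma tight_sum {n} (c b : 'I_n -> nat) : (forall y, c y <= b y) ->
  \sum_(y < n) c y = \sum_(y < n) b y -> forall y, c y = b y.
Proof.
move=> Hle Hs y; apply/eqP; rewrite eqn_leq Hle /=; rewrite leqNgt; apply/negP => lt.
have : \sum_(y < n) c y < \sum_(y < n) b y.
  rewrite (bigD1 y) //= [X in _ < X](bigD1 y) //=.
  by rewrite -addSn leq_add // leq_sum.
by rewrite Hs ltnn.
Qed.

Lemma sumn_le1 (s : seq nat) : all (fun x => x <= 1) s -> sumn s = size s -> all (fun x => x == 1) s.
Proof.
elim: s => [//|x s IH] /= /andP [x1 Hs] E.
have Hs' := IH Hs.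
have : sumn s <= size s.
  elim: s {IH Hs' E} Hs => //= y s IH /andP [y1 Hs]; have := IH Hs; lia.
move=> le; have x1' : x = 1 by lia.
by rewrite x1' eqxx Hs'; lia.
Qed.

Lemma cycle_card {R : realFieldType} {n} (A : mxmp R n) (Z0 : seq 'I_n) :
  is_cycle A Z0 -> #|[pred y | y \in Z0]| = wlen Z0 /\ 0 < wlen Z0.
Proof.
case: Z0 => [[[//]]|z Z'] [_ [Hpos [He Hd]]].
split => //.
have uZ : uniq Z'.
  apply/(uniqP z) => a b; rewrite !inE => ha hb Eab.
  apply/eqP; apply/negP => ne.
  wlog lt : a b ha hb Eab ne / a < b.
    move=> Hw; case: (ltngtP a b) => h; first exact: (Hw a b).
      by apply: (Hw b a) => //; rewrite eq_sym.
    by rewrite h eqxx in ne.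
  apply: (Hd a.+1 b.+1); first by rewrite ltnS lt /wlen /=.
    by case.
  by rewrite /= (onth_some z ha) (onth_some z hb) Eab.
have zZ : z \in Z'.
  move: He Hpos; rewrite /wlen /=; case: Z' {uZ Hd} => [//|x Z''] /= He _.
  rewrite (onth_some x) // in He; move: He => [->].
  by rewrite mem_nth.
rewrite /wlen /= -(card_uniqP uZ); apply: eq_card => y.
by rewrite !inE; case: (eqVneq y z) => [->|] //=.
Qed.

Theorem lemmal (R : realFieldType) (n : nat) (A : mxmp R n) (g : nat)
  (Z0 : seq 'I_n) (i j : 'I_n) (W : seq 'I_n) :
  max_cycle_mean A 0%R ->
  crit_girth A g ->
  T1_is A (DM g n) ->
  unique_crit_cycle A g Z0 ->
  i \in Z0 -> j \notin Z0 ->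
  interesting A Z0 g W ->
  (forall p q : nat, (p < q < size W)%N ->
     onth W p = Some i -> onth W q = Some i ->
     (forall r : nat, (p < r < q)%N -> onth W r <> Some i) ->
     count_mem j (drop p.+1 (take q W)) = 1%N) /\
  (i \in W ->
     count_mem j (take (index i W) W) = 1%N /\
     count_mem j (take (index i (rev W)) (rev W)) = 1%N).
Proof.
move=> Hm _ _ [[HZc _] [HZlen _]] iZ jZ [Hto HL].
have [Hcard g0] := cycle_card HZc; rewrite HZlen in Hcard g0.
have C : Ctx A Z0 g W by split.
have ij : i != j by apply: contraNneq jZ => <-.
have n2 : 2 <= n.
  rewrite leqNgt; apply/negP => n1; move: ij.
  have hi := ltn_ord i; have hj := ltn_ord j.
  have -> : i = j by apply: ord_inj; lia.
  by rewrite eqxx.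
have Wne : W <> [::].
  by have [_ _ [u [v [[[Wn _] _] _]]]] := C.
have sW : size W = n * g.+1 - g.
  move: HL; rewrite /wlen /DM; case: W Wne {C Hto} => [//|x W'] _ /= ->.
  have -> : n = (n - 2) + 2 by lia.
  rewrite addnK; set k := n - 2; rewrite mulnDl !mulnS (mulnC g k); lia.
pose b (y : 'I_n) := if y \in Z0 then g else g.+1.
have Hb : forall y, count_mem y W <= b y.
  move=> y; case: (boolP (y \in W)) => yW; last by rewrite (count_memPn yW).
  have [pre [segs [post [HW yp ypo Hs]]]] := decomp yW.
  rewrite HW decomp_count // /b; case: ifP => yZ.
    apply: (segs_lt C HW Hs); exists y; split => //.
    by rewrite mem_cat in_cons eqxx orbT.
  exact: (segs_le C HW Hs).
have Hsb : \sum_(y < n) b y = n * g.+1 - g.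
  have E : \sum_(y < n) b y + \sum_(y < n) (y \in Z0 : nat) = n * g.+1.
    rewrite -big_split /= (eq_bigr (fun _ => g.+1)) ?sum_nat_const ?card_ord //.
    by move=> y _; rewrite /b; case: (y \in Z0) => /=; lia.
  have E2 : \sum_(y < n) (y \in Z0 : nat) = g.
    rewrite -big_mkcond /= sum1_card -Hcard; apply: eq_card => y.
    by rewrite !inE.
  lia.
have Htight := tight_sum Hb (etrans (sum_count_mem W) (etrans sW (esym Hsb))).
have ci : count_mem i W = g by rewrite Htight /b iZ.
have cj : count_mem j W = g.+1 by rewrite Htight /b (negbTE jZ).
have jW : j \in W by rewrite -has_pred1 has_count cj.
have [pre [segs [post [HW jp jpo Hs]]]] := decomp jW.
have ssegs : size segs = g by move: cj; rewrite HW decomp_count // => [[]].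
have ip : i \notin pre.
  apply/negP => ipre; have := segs_lt C HW Hs (ex_intro _ i (conj iZ _)).
  by rewrite mem_cat ipre ssegs ltnn => /(_ isT).
have ipo : i \notin post.
  apply/negP => ipost; have := segs_lt C HW Hs (ex_intro _ i (conj iZ _)).
  by rewrite mem_cat in_cons ipost !orbT ssegs ltnn => /(_ isT).
have Hle1 : all (fun x => x <= 1) (map (count_mem i) segs).
  apply/allP => x /mapP [s sin ->].
  have [t0 t0s Et0] : exists2 t0, t0 < size segs & s = nth [::] segs t0.
    by exists (index s segs); rewrite ?index_mem ?nth_index.
  rewrite Et0; apply: (seg_i_le1 C HW Hs) => //; by rewrite ssegs.
have Hsum : sumn (map (count_mem i) segs) = size (map (count_mem i) segs).
  rewrite size_map ssegs -ci HW count_cat (count_memPn ip) /= count_cat (count_memPn ipo) [j == i]eq_sym (negbTE ij).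
  rewrite addn0 add0n; elim: (segs) => //= s ss ->; by rewrite count_cat.
have Hall : all (fun s => segok j s && (count_mem i s == 1)) segs.
  have := sumn_le1 Hle1 Hsum; rewrite all_map.
  move=> H; apply/allP => s sin; rewrite (allP Hs s sin) /=; exact: (allP H s sin).
have Hinv : Inv j i W by rewrite HW; apply: inv_full.
split.
  move=> p q pqW Hp Hq Hr.
  have qW : q < size W by case/andP: pqW.
  have pW : p < size W by case/andP: pqW => pq _; apply: ltn_trans pq qW.
  apply: (final_i (x0 := i) ij Hinv pqW).
  - by apply: onth_nth Hp.
  - by apply: onth_nth Hq.
  - move=> r prq Hnr; apply: (Hr r prq).
    have rW : r < size W by case/andP: prq => _ rq; apply: ltn_trans rq qW.
    by rewrite (onth_some i rW) Hnr.
move=> iW; split; first exact: final_ii_a.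
by apply: final_ii_b => //; rewrite ci cj.
Qed.
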